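(* Let $(A,\circ_A)$ be a Leibniz algebra, $(l,r,V)$ a representation of it, and $T:V\to A$ an anti-$\mathcal O$-operator of $(A,\circ_A)$ associated to $(l,r,V)$. Define multiplications on $V$ by $u\succ_V v=-l(Tu)v$ and $u\prec_V v=-r(Tv)u$, and set $u\circ_V v=u\succ_V v+u\prec_V v$. Then: (a) $(V,\succ_V,\prec_V)$ satisfies (AL2), (AL3), (AL4); (b) $(V,\succ_V,\prec_V)$ is an anti-pre-Leibniz algebra (equivalently, $(V,\circ_V)$ is a Leibniz algebra) if and only if $T$ is strong; (c) in this case $T$ is a homomorphism of Leibniz algebras from $(V,\circ_V)$ to $(A,\circ_A)$, there is a well-defined anti-pre-Leibniz algebra structure on $T(V)=\{Tu\mid u\in V\}\subseteq A$ given by $(Tu)\succ_A(Tv)=T(u\succ_V v)$, $(Tu)\prec_A(Tv)=T(u\prec_V v)$, and $T:V\to T(V)$ is a homomorphism of anti-pre-Leibniz algebras.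
   Context: All vector spaces are finite-dimensional over a field $\mathbb K$ of characteristic zero. A Leibniz algebra is a vector space $A$ with a multiplication $\circ_A$ satisfying $x\circ_A(y\circ_A z)=(x\circ_A y)\circ_A z+y\circ_A(x\circ_A z)$. A representation of $(A,\circ_A)$ is a triple $(l,r,V)$ with linear maps $l,r:A\to\mathrm{End}(V)$ such that for all $x,y\in A,v\in V$: $l(x\circ_A y)v=l(x)l(y)v-l(y)l(x)v$; $r(x\circ_A y)v=l(x)r(y)v-r(y)l(x)v$; $r(y)l(x)v=-r(y)r(x)v$. An anti-$\mathcal O$-operator of $(A,\circ_A)$ associated to $(l,r,V)$ is a linear map $T:V\to A$ with $(Tu)\circ_A(Tv)=-T\big(l(Tu)v+r(Tv)u\big)$ for all $u,v\in V$; it is strong if moreover $l\big((Tu)\circ_A(Tv)\big)w+r\big((Tu)\circ_A(Tw)\big)v-r\big((Tv)\circ_A(Tw)\big)u=0$ for all $u,v,w\in V$. An anti-pre-Leibniz algebra is a vector space $A$ with multiplications $\succ_A,\prec_A$ such that, with $x\circ_A y=x\succ_A y+x\prec_A y$, for all $x,y,z$: (AL1) $(x\circ_A y)\prec_A z=x\succ_A(y\circ_A z)-y\succ_A(x\circ_A z)$; (AL2) $(x\circ_A y)\succ_A z=y\succ_A(x\succ_A z)-x\succ_A(y\succ_A z)$; (AL3) $x\prec_A(y\circ_A z)=(y\succ_A x)\prec_A z-y\succ_A(x\prec_A z)$; (AL4) $(x\succ_A y)\prec_A z=-(y\prec_A x)\prec_A z$. A homomorphism of anti-pre-Leibniz algebras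 is a linear map preserving both multiplications. *)

(* Defs.v *)
From HB Require Import structures.
From mathcomp Require Import all_boot all_order all_algebra.
Set Implicit Arguments. Unset Strict Implicit. Unset Printing Implicit Defensive.
Import GRing.Theory.
Local Open Scope ring_scope.

Section Defs.
Variable K : fieldType.

Definition lin_map (U W : lmodType K) (f : U -> W) : Prop :=
  forall (a : K) (x y : U), f (a *: x + y) = a *: f x + f y.

Definition bilinear_mul (A : lmodType K) (m : A -> A -> A) : Prop :=
  (forall x, lin_map (m x)) /\ (forall y, lin_map (fun x => m x y)).

Definition leibniz_id (A : lmodType K) (m : A -> A -> A) : Prop :=
  forall x y z, m x (m y z) = m (m x y) z + m y (m x z).

Definition leibniz_algebra (A : lmodType K) (m : A -> A -> A) : Prop :=
  bilinear_mul m /\ leibniz_id m.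

Definition lin_op (A V : lmodType K) (f : A -> V -> V) : Prop :=
  forall (a : K) (x y : A) (v : V), f (a *: x + y) v = a *: f x v + f y v.

Definition leibniz_rep (A V : lmodType K) (m : A -> A -> A)
  (l r : A -> V -> V) : Prop :=
  [/\ lin_op l, lin_op r,
      (forall x, lin_map (l x)) & (forall x, lin_map (r x))] /\
  [/\ (forall x y v, l (m x y) v = l x (l y v) - l y (l x v)),
      (forall x y v, r (m x y) v = l x (r y v) - r y (l x v)) &
      (forall x y v, r y (l x v) = - r y (r x v))].

Definition anti_O_op (A V : lmodType K) (m : A -> A -> A)
  (l r : A -> V -> V) (T : V -> A) : Prop :=
  forall u v, m (T u) (T v) = - T (l (T u) v + r (T v) u).

Definition strong_anti_O_op (A V : lmodType K) (m : A -> A -> A)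
  (l r : A -> V -> V) (T : V -> A) : Prop :=
  anti_O_op m l r T /\
  forall u v w, l (m (T u) (T v)) w + r (m (T u) (T w)) v
                - r (m (T v) (T w)) u = 0.

Section APL.
Variables (A : lmodType K) (succ prec : A -> A -> A).
Let circ x y := succ x y + prec x y.
Definition AL1 : Prop := forall x y z,
  prec (circ x y) z = succ x (circ y z) - succ y (circ x z).
Definition AL2 : Prop := forall x y z,
  succ (circ x y) z = succ y (succ x z) - succ x (succ y z).
Definition AL3 : Prop := forall x y z,
  prec x (circ y z) = prec (succ y x) z - succ y (prec x z).
Definition AL4 : Prop := forall x y z,
  prec (succ x y) z = - prec (prec y x) z.
Definition anti_pre_leibniz : Prop :=
  [/\ bilinear_mul succ, bilinear_mul prec, AL1, AL2 & AL3] /\ AL4.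
End APL.

Definition circ_of (A : lmodType K) (succ prec : A -> A -> A) x y :=
  succ x y + prec x y.

Definition succV (A V : lmodType K) (l : A -> V -> V) (T : V -> A) (u v : V) : V :=
  - l (T u) v.
Definition precV (A V : lmodType K) (r : A -> V -> V) (T : V -> A) (u v : V) : V :=
  - r (T v) u.

End Defs.

(* Main.v *)
Require Import Defs.
From HB Require Import structures.
From mathcomp Require Import all_boot all_order all_algebra.
Import GRing.Theory.
Local Open Scope ring_scope.

Lemma lin_mapD (K : fieldType) (U W : lmodType K) (f : U -> W) :
  lin_map f -> forall x y, f (x + y) = f x + f y.
Proof. by move=> hf x y; have := hf 1 x y; rewrite !scale1r. Qed.
Arguments lin_mapD {K U W f}.

Lemma lin_map0 (K : fieldType) (U W : lmodType K) (f : U -> W) :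
  lin_map f -> f 0 = 0.
Proof.
move=> hf; have := lin_mapD hf 0 0; rewrite addr0 => /eqP.
by rewrite -subr_eq0 opprD addrA subrr add0r oppr_eq0 => /eqP.
Qed.
Arguments lin_map0 {K U W f}.

Lemma lin_mapN (K : fieldType) (U W : lmodType K) (f : U -> W) :
  lin_map f -> forall x, f (- x) = - f x.
Proof.
move=> hf x; have := hf (-1) x 0.
by rewrite addr0 (lin_map0 hf) addr0 !scaleN1r.
Qed.
Arguments lin_mapN {K U W f}.

Lemma lin_mapB (K : fieldType) (U W : lmodType K) (f : U -> W) :
  lin_map f -> forall x y, f (x - y) = f x - f y.
Proof. by move=> hf x y; rewrite (lin_mapD hf) (lin_mapN hf). Qed.
Arguments lin_mapB {K U W f}.

Lemma lin_mapZ (K : fieldType) (U W : lmodType K) (f : U -> W) :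
  lin_map f -> forall a x, f (a *: x) = a *: f x.
Proof. by move=> hf a x; have := hf a x 0; rewrite !addr0 (lin_map0 hf) addr0. Qed.
Arguments lin_mapZ {K U W f}.

Lemma zstart (V : zmodType) (x y : V) : 0 + (x - y) = 0 -> x = y.
Proof. by rewrite add0r => /eqP; rewrite subr_eq0 => /eqP. Qed.
Ltac zprep := apply: zstart; rewrite !(opprD, opprK, addrA).
Ltac mvend t := repeat match goal with
  |- context [?x + ?u + ?z] => unify u t; assert_fails (unify z t); rewrite (addrAC x u z) end.
Ltac zc t := mvend t; mvend (- t); rewrite ?addrK ?subrK.
Ltac zfin := rewrite ?add0r //.

Ltac solveR sA pA RsA RpA RD RN RZ Rproj Tpre :=
  match goal with
  | |- _ = vsval (vsproj _ _) => apply: Rproj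
  | |- _ = vsval (sA _ _) => eapply RsA; solveR sA pA RsA RpA RD RN RZ Rproj Tpre
  | |- _ = vsval (pA _ _) => eapply RpA; solveR sA pA RsA RpA RD RN RZ Rproj Tpre
  | |- _ = vsval (_ + _) => eapply RD; solveR sA pA RsA RpA RD RN RZ Rproj Tpre
  | |- _ = vsval (- _) => eapply RN; solveR sA pA RsA RpA RD RN RZ Rproj Tpre
  | |- _ = vsval (_ *: _) => eapply RZ; solveR sA pA RsA RpA RD RN RZ Rproj Tpre
  | |- _ = vsval ?a => apply: (Tpre a)
  end.

Theorem proposition2p9 (K : fieldType) (hchar : [pchar K] =i pred0)
  (A V : vectType K) (mA : A -> A -> A) (l r : A -> V -> V) (T : 'Hom(V, A))
  (hA : leibniz_algebra mA) (hrep : leibniz_rep mA l r)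
  (hT : anti_O_op mA l r T) :
  let sV := succV l T in
  let pV := precV r T in
  let cV := circ_of sV pV in
  (* (a) *)
  [/\ AL2 sV pV, AL3 sV pV & AL4 sV pV] /\
  (* (b) *)
  (anti_pre_leibniz sV pV <-> strong_anti_O_op mA l r T) /\
  (leibniz_algebra cV <-> strong_anti_O_op mA l r T) /\
  (* (c) *)
  (strong_anti_O_op mA l r T ->
     (forall u v, T (cV u v) = mA (T u) (T v)) /\
     exists (sA pA : subvs_of (limg T) -> subvs_of (limg T) -> subvs_of (limg T)),
       anti_pre_leibniz sA pA /\
       (forall u v, sA (vsproj (limg T) (T u)) (vsproj (limg T) (T v))
                    = vsproj (limg T) (T (sV u v))) /\
       (forall u v, pA (vsproj (limg T) (T u)) (vsproj (limg T) (T v))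
                    = vsproj (limg T) (T (pV u v)))).
Proof.
move=> sV pV cV.
case: hrep => -[lop rop llin rlin] [h1 h2 h3].
have lD x := lin_mapD (llin x); have lN x := lin_mapN (llin x).
have lZ x := lin_mapZ (llin x); have l0 x := lin_map0 (llin x).
have rD x := lin_mapD (rlin x); have rN x := lin_mapN (rlin x).
have rZ x := lin_mapZ (rlin x); have r0 x := lin_map0 (rlin x).
have lopl v : lin_map (fun x => l x v) by move=> a x y; apply: lop.
have ropl v : lin_map (fun x => r x v) by move=> a x y; apply: rop.
have hTc u v : T (cV u v) = mA (T u) (T v).
  by rewrite hT /cV /circ_of /sV /pV /succV /precV -opprD linearN.
have cVE u v : cV u v = - l (T u) v - r (T v) u by [].
have hTc' u v : T (- l (T u) v - r (T v) u) = mA (T u) (T v) := hTc u v.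
have h3' x y v : r y (r x v) = - r y (l x v) by rewrite h3 opprK.
pose Str x y z := l (mA (T x) (T y)) z + r (mA (T x) (T z)) y - r (mA (T y) (T z)) x.
have AL2' x y z : sV (cV x y) z = sV y (sV x z) - sV x (sV y z).
  by rewrite /sV /succV hTc h1 !lN !opprK opprB.
have AL3' x y z : pV x (cV y z) = pV (sV y x) z - sV y (pV x z).
  by rewrite /sV /pV /succV /precV hTc h2 !lN !rN !opprK opprB.
have AL4' x y z : pV (sV x y) z = - pV (pV y x) z.
  by rewrite /sV /pV /succV /precV !rN !opprK h3.
have D1 x y z : sV x (cV y z) - sV y (cV x z) - pV (cV x y) z = Str x y z.
  rewrite /Str !cVE /sV /pV /succV /precV !h1 !h2 !lD !rD !lN !rN !opprK !h3'.
  zprep. zc (l (T x) (l (T y) z)). zc (l (T x) (r (T z) y)). zc (l (T y) (l (T x) z)).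
  zc (l (T y) (r (T z) x)). zc (r (T z) (l (T x) y)). zc (r (T z) (l (T y) x)). zfin.
have L2 x y z : cV x (cV y z) - cV (cV x y) z - cV y (cV x z) = Str x y z + Str x y z.
  rewrite /Str !cVE !hTc' !h1 !h2 !lD !rD !lN !rN ?opprK ?h3'. zprep.
  zc (l (T x) (l (T y) z)). zc (l (T x) (r (T z) y)). zc (l (T y) (l (T x) z)). zc (l (T y) (r (T z) x)). zc (r (T z) (l (T x) y)). zc (r (T z) (l (T y) x)). zfin.
have bs : bilinear_mul sV.
  split=> [x a u v | y a u v]; rewrite /sV /succV.
    by rewrite lD lZ opprD scalerN.
  by rewrite linearP lop opprD scalerN.
have bp : bilinear_mul pV.
  split=> [x a u v | y a u v]; rewrite /pV /precV.
    by rewrite linearP rop opprD scalerN.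
  by rewrite rD rZ opprD scalerN.
have bc : bilinear_mul cV.
  have [bs1 bs2] := bs; have [bp1 bp2] := bp.
  split=> [x a u v | y a u v]; rewrite /cV /circ_of.
    by rewrite bs1 bp1 scalerDr addrACA.
  by rewrite bs2 bp2 scalerDr addrACA.
have two0 (v : V) : v + v = 0 -> v = 0.
  move=> h.
  have nz : (2%:R : K) != 0 by move: (hchar 2); rewrite !inE /= => ->.
  have : (2%:R : K) *: v = 0 by rewrite scaler_nat mulr2n.
  by move/eqP; rewrite scaler_eq0 (negbTE nz) /= => /eqP.
have b1 : anti_pre_leibniz sV pV <-> strong_anti_O_op mA l r T.
  split.
    case=> -[_ _ hAL1 _ _] _; split=> // u v w.
    have e : pV (cV u v) w = sV u (cV v w) - sV v (cV u w) := hAL1 u v w.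
    by have := D1 u v w; rewrite e subrr => /esym H; exact H.
  case=> _ hS; split; [split; [exact bs | exact bp | | exact AL2' | exact AL3'] | exact AL4'].
  move=> x y z.
    change (pV (cV x y) z = sV x (cV y z) - sV y (cV x z)).
  apply/esym/eqP; rewrite -subr_eq0 D1; apply/eqP; exact: hS.
split; first by split; [exact AL2' | exact AL3' | exact AL4'].
split; first exact b1.
split.
  split.
    case=> _ hL; split=> // u v w.
    have := L2 u v w; rewrite hL -addrA -opprD subrr => /esym/two0 H; exact H.
  case=> _ hS; split=> // x y z.
  apply/eqP; rewrite -subr_eq0 opprD addrA L2.
  by have -> : Str x y z = 0 := hS x y z; rewrite addr0.
move=> hS; split; first exact hTc.
have [[_ _ AL1V _ _] _] := (proj2 b1) hS.
have [[mAr mAl] _] := hA.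
have [bs1 bs2] := bs; have [bp1 bp2] := bp.
pose pre (a : subvs_of (limg T)) := (T^-1)%VF (vsval a).
have Tpre a : T (pre a) = vsval a by rewrite /pre limg_lfunVK // subvsP.
have inT u : T u \in limg T by apply: memv_img; apply: memvf.
have Tl0 u w : T w = 0 -> T (l (T u) w) = 0.
  move=> Tw; have := hT u w.
  rewrite Tw (lin_map0 (mAr _)) (lin_map0 (ropl u)) addr0 => /esym/eqP.
  by rewrite oppr_eq0 => /eqP.
have Tr0 v w : T w = 0 -> T (r (T v) w) = 0.
  move=> Tw; have := hT w v.
  rewrite Tw (lin_map0 (mAl _)) (lin_map0 (lopl v)) add0r => /esym/eqP.
  by rewrite oppr_eq0 => /eqP.
have WDs u u' v v' : T u = T u' -> T v = T v' -> T (sV u v) = T (sV u' v').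
  move=> eu ev; rewrite /sV /succV eu !linearN; congr (- _).
  apply/eqP; rewrite -subr_eq0 -linearB -(lin_mapB (llin _)); apply/eqP/Tl0.
  by rewrite linearB /= ev subrr.
have WDp u u' v v' : T u = T u' -> T v = T v' -> T (pV u v) = T (pV u' v').
  move=> eu ev; rewrite /pV /precV ev !linearN; congr (- _).
  apply/eqP; rewrite -subr_eq0 -linearB -(lin_mapB (rlin _)); apply/eqP/Tr0.
  by rewrite linearB /= eu subrr.
pose sA a b := vsproj (limg T) (T (sV (pre a) (pre b))).
pose pA a b := vsproj (limg T) (T (pV (pre a) (pre b))).
have RsA a b u v : T u = vsval a -> T v = vsval b -> T (sV u v) = vsval (sA a b).
  move=> hu hv; rewrite /sA vsprojK ?inT //; apply: WDs; by rewrite Tpre.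
have RpA a b u v : T u = vsval a -> T v = vsval b -> T (pV u v) = vsval (pA a b).
  move=> hu hv; rewrite /pA vsprojK ?inT //; apply: WDp; by rewrite Tpre.
have RD a b u v : T u = vsval a -> T v = vsval b -> T (u + v) = vsval (a + b).
  by move=> hu hv; rewrite !linearD /= hu hv.
have RN a u : T u = vsval a -> T (- u) = vsval (- a).
  by move=> hu; rewrite !linearN /= hu.
have RZ k a u : T u = vsval a -> T (k *: u) = vsval (k *: a).
  by move=> hu; rewrite !linearZ /= hu.
have Rproj u : T u = vsval (vsproj (limg T) (T u)) by rewrite vsprojK ?inT.
have Rinj a b u v : T u = vsval a -> T v = vsval b -> T u = T v -> a = b.
  by move=> hu hv e; rewrite -(vsvalK a) -(vsvalK b) -hu -hv e.
have congT X Y : X = Y -> T X = T Y by move->.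
exists sA, pA; split; last split.
- split; [split|].
  + split=> [a k b c | c k a b];
      (eapply Rinj; [solveR sA pA RsA RpA RD RN RZ Rproj Tpre
                    |solveR sA pA RsA RpA RD RN RZ Rproj Tpre|]).
      by apply: congT; apply: bs1.
    by apply: congT; apply: bs2.
  + split=> [a k b c | c k a b];
      (eapply Rinj; [solveR sA pA RsA RpA RD RN RZ Rproj Tpre
                    |solveR sA pA RsA RpA RD RN RZ Rproj Tpre|]).
      by apply: congT; apply: bp1.
    by apply: congT; apply: bp2.
  + move=> a b c; eapply Rinj; [solveR sA pA RsA RpA RD RN RZ Rproj Tpre
                    |solveR sA pA RsA RpA RD RN RZ Rproj Tpre|].
    by apply: congT; apply: AL1V.
  + move=> a b c; eapply Rinj; [solveR sA pA RsA RpA RD RN RZ Rproj Tpre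
                    |solveR sA pA RsA RpA RD RN RZ Rproj Tpre|].
    by apply: congT; apply: AL2'.
  + move=> a b c; eapply Rinj; [solveR sA pA RsA RpA RD RN RZ Rproj Tpre
                    |solveR sA pA RsA RpA RD RN RZ Rproj Tpre|].
    by apply: congT; apply: AL3'.
  + move=> a b c; eapply Rinj; [solveR sA pA RsA RpA RD RN RZ Rproj Tpre
                    |solveR sA pA RsA RpA RD RN RZ Rproj Tpre|].
    by apply: congT; apply: AL4'.
- move=> u v; eapply Rinj; [solveR sA pA RsA RpA RD RN RZ Rproj Tpre
                    |solveR sA pA RsA RpA RD RN RZ Rproj Tpre|] => //.
- move=> u v; eapply Rinj; [solveR sA pA RsA RpA RD RN RZ Rproj Tpre
                    |solveR sA pA RsA RpA RD RN RZ Rproj Tpre|] => //.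
Qed.
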